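(* For every $D$-sequence $\mathbf{b}$, the topology $\tau_{\mathbf{b}}$ is strictly finer than $\lambda_{\mathbf{b}}$; in particular the identity $(\mathbb{Z},\tau_{\mathbf{b}})\to(\mathbb{Z},\lambda_{\mathbf{b}})$ is a continuous isomorphism which is not a homeomorphism.
   Context: $\mathbb{T}=\mathbb{R}/\mathbb{Z}$; $\mathbb{T}_m=[-\frac{1}{4m},\frac{1}{4m}]+\mathbb{Z}$. A $D$-sequence is a sequence $\mathbf{b}=(b_n)_{n\in\mathbb{N}_0}$ of natural numbers with $b_0=1$, $b_n\mid b_{n+1}$, $b_n\neq b_{n+1}$. $\lambda_{\mathbf{b}}$ is the group topology on $\mathbb{Z}$ with neighborhood basis $\{b_n\mathbb{Z}\}_{n\in\mathbb{N}_0}$ at $0$. $\tau_{\mathbf{b}}$ is the group topology on $\mathbb{Z}$ with neighborhood basis at $0$ given by $V_{\mathbf{b},m}=\{k\in\mathbb{Z}: \frac{k}{b_n}+\mathbb{Z}\in\mathbb{T}_m \text{ for all } n\in\mathbb{N}\}$, $m\in\mathbb{N}$. *)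

(* Defs.v *)
From HB Require Import structures.
From mathcomp Require Import all_boot all_order all_algebra.
Set Implicit Arguments. Unset Strict Implicit. Unset Printing Implicit Defensive.
Import Order.TTheory GRing.Theory Num.Theory.
Local Open Scope ring_scope.

(* A D-sequence: b_0 = 1, b_n | b_{n+1}, b_n <> b_{n+1}, all natural numbers
   (positive, since b_0 = 1 and divisibility forces b_n > 0 ... we still
   require positivity explicitly as "natural numbers" in the paper are >= 1). *)
Definition Dseq (b : nat -> nat) : Prop :=
  b 0%N = 1%N /\ (forall n, (0 < b n)%N) /\
  (forall n, (b n %| b n.+1)%N) /\ (forall n, b n <> b n.+1).

(* x + Z lies in T_m = [-1/(4m), 1/(4m)] + Z (m >= 1). *)
Definition in_Tm (m : nat) (x : rat) : Prop :=
  exists j : int, `|x - j%:~R| <= (4 * m%:R)^-1.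

Definition lambda_nbhd (b : nat -> nat) (n : nat) (k : int) : Prop :=
  ((b n)%:Z %| k)%Z.

Definition V_nbhd (b : nat -> nat) (m : nat) (k : int) : Prop :=
  forall n : nat, (0 < n)%N -> in_Tm m (k%:~R / (b n)%:R).

Definition open_from_base (I : Type) (P : I -> Prop) (B : I -> int -> Prop)
  (U : int -> Prop) : Prop :=
  forall x, U x -> exists i, P i /\ forall y, B i y -> U (x + y).

Definition lambda_open (b : nat -> nat) : (int -> Prop) -> Prop :=
  open_from_base (fun _ : nat => True) (lambda_nbhd b).

Definition tau_open (b : nat -> nat) : (int -> Prop) -> Prop :=
  open_from_base (fun m : nat => (0 < m)%N) (V_nbhd b).

Definition finer (T1 T2 : (int -> Prop) -> Prop) : Prop :=
  forall U, T2 U -> T1 U.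

Definition strictly_finer (T1 T2 : (int -> Prop) -> Prop) : Prop :=
  finer T1 T2 /\ ~ finer T2 T1.

(* Main.v *)
Set Warnings "-notation-overridden,-ambiguous-paths".
Require Import Defs.
From HB Require Import structures.
From mathcomp Require Import all_boot all_order all_algebra.
From mathcomp Require Import zify ring lra.
Import Order.TTheory GRing.Theory Num.Theory.
Local Open Scope ring_scope.

Lemma key (m B : nat) (a : int) : (0 < B)%N ->
  in_Tm m (a%:~R / B%:R) -> exists j : int, (4 * m)%:Z * `|a - j * B%:Z| <= B%:Z.
Proof.
move=> B0 [j Hj]; exists j.
have BR : (0 : rat) < B%:R by rewrite ltr0n.
have E : (a - j * B%:Z)%:~R = (a%:~R / B%:R - j%:~R) * (B%:R : rat).
  rewrite rmorphB rmorphM /= mulrBl -mulrA mulVf ?gt_eqF // mulr1.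
  by [].

rewrite -(ler_int rat) rmorphM /= intr_norm E normrM (gtr0_norm BR).
have c1 : forall n : nat, (n%:Z)%:~R = (n%:R : rat) by move=> n; rewrite -pmulrn.
rewrite !c1 natrM.
case: (posnP m) => [->|m0]; first by rewrite mulr0 mul0r ler0n.
have m4 : (0:rat) < 4 * m%:R by rewrite mulr_gt0 // ltr0n.
rewrite mulrA -[X in _ <= X]mul1r ler_wpM2r ?ler0n //.
by have := ler_wpM2l (ltW m4) Hj; rewrite mulfV ?gt_eqF.
Qed.

Lemma tri (b : nat -> nat) (m : nat) (y z : int) :
  V_nbhd b (2 * m) y -> V_nbhd b (2 * m) z -> V_nbhd b m (y + z).
Proof.
move=> Hy Hz n n0.
have [j1 H1] := Hy n n0; have [j2 H2] := Hz n n0.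
exists (j1 + j2).
have -> : (y + z)%:~R / (b n)%:R - (j1 + j2)%:~R =
  ((y%:~R / (b n)%:R - j1%:~R) + (z%:~R / (b n)%:R - j2%:~R) : rat).
  by rewrite !rmorphD /=; ring.
apply: le_trans (ler_normD _ _) _.
apply: le_trans (lerD H1 H2) _.
case: (posnP m) => [->|m0]; first by rewrite !mulr0 invr0 addr0.
rewrite natrM; rewrite le_eqVlt; apply/orP; left; apply/eqP. field.
by rewrite pnatr_eq0 -lt0n.
Qed.

Lemma arith (c q bn : int) (j : int) : 1 <= c -> (q = 2 * c \/ q = 2 * c + 1) ->
  0 < bn -> ~ (8 * `|c * bn - j * (q * bn)| <= q * bn).
Proof.
move=> c1 hq b0 H.
have E : c * bn - j * (q * bn) = (c - j * q) * bn by ring.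
rewrite E normrM (gtr0_norm b0) mulrA ler_pM2r // in H.
have : 8 * c <= 8 * `|c - j * q|.
  case: (lerP j 0) => hj.
  - rewrite ler_pM2l //; apply: le_trans (ler_norm _); nia.
  - rewrite ler_pM2l //; rewrite distrC; apply: le_trans (ler_norm _); nia.
lia.
Qed.

Theorem proposition3p7 (b : nat -> nat) :
  Dseq b -> strictly_finer (tau_open b) (lambda_open b).
Proof.
move=> [b0 [bpos [bdvd bneq]]]; split.
- move=> U HU x Ux.
  have [n [_ Hn]] := HU x Ux.
  exists (b n); split; first exact: bpos.
  move=> y Vy; apply: Hn; rewrite /lambda_nbhd.
  case: (posnP n) => [->|n0]; first by rewrite b0 dvd1z.
  have [j Hj] := key _ _ _ (bpos n) (Vy n n0).
  have bz : 0 < (b n)%:Z by rewrite ltz_nat bpos.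
  have -> : y = j * (b n)%:Z.
    apply/eqP; rewrite -subr_eq0; apply/eqP.
    have : 4 * (b n)%:Z * `|y - j * (b n)%:Z| <= (b n)%:Z by rewrite -[4 * _]/((4 * b n)%N%:Z).
    case: (y - j * (b n)%:Z =P 0) => // /eqP hne.
    have : 1 <= `|y - j * (b n)%:Z| by rewrite -gtz0_ge1 normr_gt0.
    nia.
  by rewrite dvdz_mull.
- move=> H.
  pose U := fun x : int => exists m, (0 < m)%N /\ forall y, V_nbhd b m y -> V_nbhd b 2 (x + y).
  have oU : tau_open b U.
    move=> x [m [m0 Hm]]; exists (2 * m)%N; split; first by rewrite muln_gt0.
    move=> y Vy; exists (2 * m)%N; split; first by rewrite muln_gt0.
    by move=> z Vz; rewrite -addrA; apply: Hm; apply: tri.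
  have U0 : U 0 by exists 2%N; split => // y Vy; rewrite add0r.
  have [n [_ Hn]] := H U oU 0 U0.
  pose q := (b n.+1 %/ b n)%N. pose c := (q %/ 2)%N.
  have Eq : b n.+1 = (q * b n)%N by rewrite divnK.
  have q2 : (2 <= q)%N.
    case: (ltnP q 2) => // hq.
    have : q = 0%N \/ q = 1%N by lia.
    case=> hq'; rewrite hq' in Eq.
    - by have := bpos n.+1; rewrite Eq.
    - by have := bneq n; rewrite Eq mul1n.
  have Hd : lambda_nbhd b n ((c * b n)%N%:Z) by rewrite /lambda_nbhd PoszM dvdz_mull.
  have [m [m0 Hm]] := Hn _ Hd.
  have V0 : V_nbhd b m 0 by move=> k _; exists 0; rewrite mul0r subr0 normr0 invr_ge0 mulr_ge0 // ler0n.
  have V2 := Hm 0 V0; rewrite add0r addr0 in V2.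
  have [j Hj] := key _ _ _ (bpos n.+1) (V2 n.+1 isT).
  apply: (@arith c%:Z q%:Z (b n)%:Z j).
  - rewrite lez_nat /c; lia.
  - rewrite /c; lia.
  - by rewrite ltz_nat bpos.
  - move: Hj; by rewrite Eq !PoszM.
Qed.
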